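(* For any finite abelian group $G$ and positive integer $n$, the monoid $I_n(\hat G)$ is left inductive and right inductive.
   Context: $\hat G=G\sqcup\{0\}$ with $0$ absorbing. $I_n(\hat G)$ is the monoid of $n\times n$ matrices with entries in $\hat G$ having at most one nonzero entry in each row and each column, under matrix multiplication; it is a $\hat G$-linear monoid with $G$ embedded as scalar matrices. $\mathrm{Vect}_{\hat G}$: objects are finite pointed sets with an action of $\hat G$ ($0v=0$, $g0=0$) such that $G$ acts freely on nonzero elements; morphisms $f$ satisfy $f(0)=0$, $f(gv)=gf(v)$, $f(v_1)=f(v_2)\neq0\Rightarrow Gv_1=Gv_2$. For a monoid $M$ with zero and $a\in M$: $J(a)=MaM$, $I(a)=\{x\in J(a):MxM\neq J(a)\}$, $P(a)=(J(a)\setminus I(a))\cup\{0\}$. $M$ acts on $P(a)$ by left translation ($m\cdot x=mx$ if $mx\in J(a)\setminus I(a)$, else $0$) and on the right by right translation analogously. $M$ is left (resp. right) inductive if for every idempotent $e\in M$, each left (resp. right) translation by an element of $M$ is a morphism of $\mathrm{Vect}_{\hat G}$ on $P(e)$ (so that $P(e)$ is a $\hat G$-linear representation of $M$, resp. of $M^{\mathrm{op}}$, with $0$ acting as zero and $G$ as scalars). *)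

(* Defs.v *)
From mathcomp Require Import all_boot all_fingroup.
Set Implicit Arguments. Unset Strict Implicit. Unset Printing Implicit Defensive.

(* \hat G = G ⊔ {0} is modelled as [option gT]: [None] is the absorbing 0. *)
Section RookMonoid.
Variables (gT : finGroupType) (n : nat).

Definition mat := {ffun 'I_n * 'I_n -> option gT}.

Definition isI (A : mat) : bool :=
  [forall i, forall j, forall j',
     ((A (i, j) != None) && (A (i, j') != None)) ==> (j == j')] &&
  [forall j, forall i, forall i',
     ((A (i, j) != None) && (A (i', j) != None)) ==> (i == i')].

(* matrix multiplication: (AB)_{ik} = sum_j A_{ij} B_{jk}; on I_n(\hat G)
   at most one term is nonzero, so the sum is that term (or 0). *)
Definition mmul (A B : mat) : mat :=
  [ffun ik => match [pick j | (A (ik.1, j) != None) && (B (j, ik.2) != None)] with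
              | Some j => match A (ik.1, j), B (j, ik.2) with
                          | Some a, Some b => Some (a * b)%g
                          | _, _ => None
                          end
              | None => None
              end].

Definition zero : mat := [ffun _ => None].

Definition scal (g : gT) : mat := [ffun ij => if ij.1 == ij.2 then Some g else None].

Definition inJ (a x : mat) : bool :=
  isI x && [exists m, exists m', [&& isI m, isI m' & x == mmul (mmul m a) m']].

Definition sameJ (x a : mat) : bool := [forall y, inJ x y == inJ a y].

Definition inI (a x : mat) : bool := inJ a x && ~~ sameJ x a.

Definition inJmI (a x : mat) : bool := inJ a x && ~~ inI a x.

Definition inP (a x : mat) : bool := inJmI a x || (x == zero).

Definition lact (a m x : mat) : mat :=
  let y := mmul m x in if inJmI a y then y else zero.
Definition ract (a m x : mat) : mat :=
  let y := mmul x m in if inJmI a y then y else zero.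

(* An object of Vect_{\hat G}: the pointed set (P, z) with the action of
   \hat G in which 0 acts as z (constant) and g \in G acts by [act g];
   G must act (as a group action) freely on nonzero elements. *)
Definition vect_obj (P : pred mat) (act : gT -> mat -> mat) (z : mat) : Prop :=
  [/\ P z /\ (forall g x, P x -> P (act g x)),
      forall g, act g z = z,
      forall x, P x -> act 1%g x = x,
      forall g h x, P x -> act g (act h x) = act (g * h)%g x
    & forall g x, P x -> x != z -> act g x = x -> g = 1%g].

Definition vect_mor (P : pred mat) (act : gT -> mat -> mat) (z : mat)
    (f : mat -> mat) : Prop :=
  [/\ forall x, P x -> P (f x),
      f z = z,
      forall g x, P x -> f (act g x) = act g (f x)
    & forall x1 x2, P x1 -> P x2 -> f x1 = f x2 -> f x1 != z ->
        exists g, x1 = act g x2].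

Definition idempotent (e : mat) : bool := isI e && (mmul e e == e).

Definition left_inductive : Prop :=
  forall e, idempotent e ->
    vect_obj (inP e) (fun g => lact e (scal g)) zero /\
    forall m, isI m -> vect_mor (inP e) (fun g => lact e (scal g)) zero (lact e m).

Definition right_inductive : Prop :=
  forall e, idempotent e ->
    vect_obj (inP e) (fun g => ract e (scal g)) zero /\
    forall m, isI m -> vect_mor (inP e) (fun g => ract e (scal g)) zero (ract e m).

End RookMonoid.

(* Main.v *)
Require Import Defs.
From mathcomp Require Import all_boot all_fingroup.
Set Implicit Arguments. Unset Strict Implicit. Unset Printing Implicit Defensive.

Section Aux.
Variables (gT : finGroupType) (n : nat).
Local Notation mat := (mat gT n).
Local Notation zero := (zero gT n).
Implicit Types (x y z p q m : mat).

Definition smul (g : gT) (x : mat) : mat := [ffun ij => omap (fun a : gT => (g * a)%g) (x ij)].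
Definition tr (x : mat) : mat := [ffun ij : 'I_n * 'I_n => x (ij.2, ij.1)].
Definition supp (x : mat) : {set 'I_n * 'I_n} := [set ij | x ij != None].
Definition rank (x : mat) := #|supp x|.

Lemma smul_neq0 g (x : mat) ij : (smul g x ij != None) = (x ij != None).
Proof. by rewrite ffunE; case: (x ij). Qed.

Lemma smul0 g : smul g zero = zero.
Proof. by apply/ffunP => ij; rewrite !ffunE. Qed.

Lemma smul1 x : smul 1%g x = x.
Proof. by apply/ffunP => ij; rewrite !ffunE; case: (x ij) => //= a; rewrite mul1g. Qed.

Lemma smul_mul g h x : smul g (smul h x) = smul (g * h)%g x.
Proof. by apply/ffunP => ij; rewrite !ffunE; case: (x ij) => //= a; rewrite mulgA. Qed.

Lemma smulK g x : smul g^-1 (smul g x) = x.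
Proof. by rewrite smul_mul mulVg smul1. Qed.

Lemma isI_row (x : mat) i j j' : isI x -> x (i,j) != None -> x (i,j') != None -> j = j'.
Proof.
case/andP => /forallP H _ H1 H2.
move: (H i) => /forallP/(_ j)/forallP/(_ j')/implyP.
by rewrite H1 H2 => /(_ isT)/eqP.
Qed.

Lemma isI_col (x : mat) i i' j : isI x -> x (i,j) != None -> x (i',j) != None -> i = i'.
Proof.
case/andP => _ /forallP H H1 H2.
move: (H j) => /forallP/(_ i)/forallP/(_ i')/implyP.
by rewrite H1 H2 => /(_ isT)/eqP.
Qed.

Lemma isI_ext (x : mat) y : (forall ij, (x ij != None) = (y ij != None)) -> isI x = isI y.
Proof.
move=> H; rewrite /isI; congr (_ && _);
apply: eq_forallb => a; apply: eq_forallb => b; apply: eq_forallb => c;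
by rewrite !H.
Qed.

Lemma isI_smul g x : isI (smul g x) = isI x.
Proof. by apply: isI_ext => ij; rewrite smul_neq0. Qed.

Lemma isI_tr x : isI (tr x) = isI x.
Proof.
rewrite /isI andbC; congr (_ && _);
apply: eq_forallb => a; apply: eq_forallb => b; apply: eq_forallb => c;
by rewrite !ffunE.
Qed.

Lemma trK x : tr (tr x) = x.
Proof. by apply/ffunP => -[i j]; rewrite !ffunE. Qed.

Lemma rank_tr x : rank (tr x) = rank x.
Proof.
rewrite /rank.
have -> : supp (tr x) = (fun ij : 'I_n * 'I_n => (ij.2, ij.1)) @^-1: supp x.
  by apply/setP => -[i j]; rewrite !inE ffunE.
by rewrite card_preimset // => -[a b] [c d] [-> ->].
Qed.

Lemma mmul_neq0 p z i k : mmul p z (i,k) != None ->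
  exists j, p (i,j) != None /\ z (j,k) != None.
Proof.
rewrite ffunE /=; case: pickP => [j /andP[H1 H2] _|//]; by exists j.
Qed.

Lemma mmul_some (p z : mat) i j k a b : isI p -> p (i,j) = Some a -> z (j,k) = Some b ->
  mmul p z (i,k) = Some (a * b)%g.
Proof.
move=> Ip Hp Hz; rewrite ffunE /=; case: pickP => [j' /andP[H1 H2]|H].
  have ej : j' = j by apply: (isI_row Ip H1); rewrite Hp.
  by subst j'; rewrite Hp Hz.
by move: (H j); rewrite Hp Hz.
Qed.

Lemma mmul_none (p z : mat) i j k a : isI p -> p (i,j) = Some a -> z (j,k) = None ->
  mmul p z (i,k) = None.
Proof.
move=> Ip Hp Hz; case E: (mmul p z (i,k)) => [c|] //.
have /mmul_neq0 [j' [H1 H2]] : mmul p z (i,k) != None by rewrite E.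
have ej : j' = j by apply: (isI_row Ip H1); rewrite Hp.
by subst j'; rewrite Hz in H2.
Qed.

Lemma mmulr0 (p : mat) : mmul p zero = zero.
Proof.
apply/ffunP => -[i k]; rewrite !ffunE /=.
by case: pickP => [j /andP[_]|//]; rewrite ffunE.
Qed.

Lemma mmul0r (p : mat) : mmul zero p = zero.
Proof.
apply/ffunP => -[i k]; rewrite !ffunE /=.
by case: pickP => [j /andP[]|//]; rewrite ffunE.
Qed.

Lemma mmul_smull g (p x : mat) : mmul (smul g p) x = smul g (mmul p x).
Proof.
apply/ffunP => -[i k]; rewrite !ffunE /=.
rewrite (@eq_pick _ _ (fun j => (p (i,j) != None) && (x (j,k) != None))); last first.
  by move=> j; rewrite smul_neq0.
case: pickP => [j _|//]; rewrite ffunE.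
by case: (p (i,j)) => //= a; case: (x (j,k)) => //= b; rewrite mulgA.
Qed.

Hypothesis Hab : forall a b : gT, (a * b = b * a)%g.

Lemma mmul_smulr g (p x : mat) : mmul p (smul g x) = smul g (mmul p x).
Proof.
apply/ffunP => -[i k]; rewrite !ffunE /=.
rewrite (@eq_pick _ _ (fun j => (p (i,j) != None) && (x (j,k) != None))); last first.
  by move=> j; rewrite smul_neq0.
case: pickP => [j _|//]; rewrite ffunE.
by case: (p (i,j)) => //= a; case: (x (j,k)) => //= b; rewrite mulgA (Hab a g) -mulgA.
Qed.

Lemma tr_mmul (x : mat) m : tr (mmul x m) = mmul (tr m) (tr x).
Proof.
apply/ffunP => -[k i]; rewrite /tr !ffunE /=.
rewrite [in RHS](@eq_pick _ _ (fun j => (x (i,j) != None) && (m (j,k) != None))); last first.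
  by move=> j; rewrite ?ffunE andbC.
case: pickP => [j _|//]; rewrite ?ffunE /=.
by case: (x (i,j)) => [a|]; case: (m (j,k)) => [b|] //=; rewrite Hab.
Qed.


Definition phi p (ik : 'I_n * 'I_n) : 'I_n * 'I_n :=
  (odflt ik.1 [pick j | p (ik.1, j) != None], ik.2).

Lemma phi_in p z ik : isI p -> mmul p z ik != None ->
  z (phi p ik) != None /\ p (ik.1, (phi p ik).1) != None.
Proof.
case: ik => i k Ip /mmul_neq0 [j [H1 H2]]; rewrite /phi /=.
case: pickP => [j' Hj'|H]; last by move: (H j); rewrite H1.
by have -> : j' = j by apply: (isI_row Ip Hj').
Qed.

Lemma rank_mull_aux p z : isI p ->
  #|phi p @: supp (mmul p z)| = rank (mmul p z) /\ phi p @: supp (mmul p z) \subset supp z.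
Proof.
move=> Ip; split.
  apply: card_in_imset => -[i k] [i' k']; rewrite !inE => Hik Hik' E.
  have [_ P1] := phi_in Ip Hik; have [_ P2] := phi_in Ip Hik'.
  move: E P1 P2; rewrite /phi /= => -[E1 ->]; rewrite E1 => P1 P2.
  by rewrite (isI_col Ip P1 P2).
apply/subsetP => _ /imsetP [ik Hik ->]; rewrite inE in Hik.
by have [P1 _] := phi_in Ip Hik; rewrite inE.
Qed.

Lemma rank_mull p z : isI p -> rank (mmul p z) <= rank z.
Proof.
move=> Ip; have [E S] := rank_mull_aux z Ip.
by rewrite -E; apply: subset_leq_card.
Qed.

Lemma rank_mull_surj p z j k : isI p -> rank (mmul p z) = rank z ->
  z (j,k) != None -> exists i, p (i,j) != None.
Proof.
move=> Ip Er Hz; have [E S] := rank_mull_aux z Ip.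
have : phi p @: supp (mmul p z) == supp z by rewrite eqEcard S E Er leqnn.
move/eqP => Eq.
have : (j,k) \in phi p @: supp (mmul p z) by rewrite Eq inE.
case/imsetP => -[i k'] Hik [Ej _]; rewrite inE in Hik.
have [_ P] := phi_in Ip Hik; exists i; move: P; rewrite /= -Ej //.
Qed.

Lemma F2_aux p x1 x2 j k c : isI p -> rank (mmul p x2) = rank x2 ->
  mmul p x1 = mmul p x2 -> x2 (j,k) = Some c -> x1 (j,k) = Some c.
Proof.
move=> Ip Er E Hc.
have [i Hi] := @rank_mull_surj p x2 j k Ip Er ltac:(by rewrite Hc).
case Ea: (p (i,j)) Hi => [a|] // _.
have := @mmul_some p x2 i j k a c Ip Ea Hc; rewrite -E.
case Eb: (x1 (j,k)) => [b|].
  by rewrite (@mmul_some p x1 i j k a b Ip Ea Eb) => -[/mulgI ->].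
by rewrite (@mmul_none p x1 i j k a Ip Ea Eb).
Qed.

Lemma F2 p x1 x2 : isI p -> rank (mmul p x1) = rank x1 -> rank (mmul p x2) = rank x2 ->
  mmul p x1 = mmul p x2 -> x1 = x2.
Proof.
move=> Ip E1 E2 E; apply/ffunP => -[j k].
case H1: (x1 (j,k)) => [b|]; case H2: (x2 (j,k)) => [c|] //.
- by rewrite (F2_aux Ip E2 E H2) in H1.
- by rewrite (F2_aux Ip E1 (esym E) H1) in H2.
- by rewrite (F2_aux Ip E2 E H2) in H1.
Qed.

Lemma rank_mulr z q : isI q -> rank (mmul z q) <= rank z.
Proof.
move=> Iq; rewrite -rank_tr tr_mmul -(rank_tr z).
by apply: rank_mull; rewrite isI_tr.
Qed.

Lemma F2r q x1 x2 : isI q -> rank (mmul x1 q) = rank x1 -> rank (mmul x2 q) = rank x2 ->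
  mmul x1 q = mmul x2 q -> x1 = x2.
Proof.
move=> Iq E1 E2 E; rewrite -(trK x1) -(trK x2); congr tr.
apply: (@F2 (tr q)); first by rewrite isI_tr.
- by rewrite -tr_mmul !rank_tr.
- by rewrite -tr_mmul !rank_tr.
- by rewrite -!tr_mmul E.
Qed.

Lemma inJ_smul_l g a y : inJ (smul g a) y = inJ a y.
Proof.
rewrite /inJ; congr (_ && _); apply/existsP/existsP.
  case=> m /existsP [m' /and3P [Im Im' /eqP E]].
  exists (smul g m); apply/existsP; exists m'.
  by rewrite isI_smul Im Im' E mmul_smull mmul_smulr eqxx.
case=> m /existsP [m' /and3P [Im Im' /eqP E]].
exists (smul g^-1 m); apply/existsP; exists m'.
by rewrite isI_smul Im Im' E mmul_smull mmul_smulr smulK eqxx.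
Qed.

Lemma inJ_smul_r g a y : inJ a (smul g y) = inJ a y.
Proof.
rewrite /inJ isI_smul; congr (_ && _); apply/existsP/existsP.
  case=> m /existsP [m' /and3P [Im Im' /eqP E]].
  exists (smul g^-1 m); apply/existsP; exists m'.
  by rewrite isI_smul Im Im' !mmul_smull -E smulK eqxx.
case=> m /existsP [m' /and3P [Im Im' /eqP E]].
exists (smul g m); apply/existsP; exists m'.
by rewrite isI_smul Im Im' !mmul_smull -E eqxx.
Qed.

Lemma sameJ_smul g x a : sameJ (smul g x) a = sameJ x a.
Proof. by apply: eq_forallb => y; rewrite inJ_smul_l. Qed.

Lemma inJmI_smul g a x : inJmI a (smul g x) = inJmI a x.
Proof. by rewrite /inJmI /inI inJ_smul_r sameJ_smul. Qed.

Lemma inJmIE a x : inJmI a x = inJ a x && sameJ x a.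
Proof. by rewrite /inJmI /inI; case: (inJ a x) => /=; rewrite ?negbK. Qed.

Lemma rank_JmI e x y : inJmI e x -> inJmI e y -> rank y <= rank x.
Proof.
rewrite !inJmIE => /andP [_ /forallP /(_ y) /eqP Sx] /andP [Jy _].
move: Jy; rewrite -Sx => /andP [_ /existsP [m /existsP [m' /and3P [Im Im' /eqP ->]]]].
apply: leq_trans (rank_mulr _ Im') _; exact: rank_mull.
Qed.

Lemma rank_JmI_eq e x y : inJmI e x -> inJmI e y -> rank y = rank x.
Proof. by move=> Hx Hy; apply/eqP; rewrite eqn_leq !(rank_JmI Hx Hy, rank_JmI Hy Hx). Qed.


Lemma obj_gen e (act : gT -> mat -> mat) :
  (forall g x, act g x = if inJmI e (smul g x) then smul g x else zero) ->
  vect_obj (inP e) act zero.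
Proof.
move=> actE.
have act0 : forall g, act g zero = zero by move=> g; rewrite actE smul0; case: ifP.
split => //.
- split; first by rewrite /inP eqxx orbT.
  move=> g x _; rewrite actE; case: ifP => H; first by rewrite /inP H.
  by rewrite /inP eqxx orbT.
- move=> x; rewrite actE smul1; case/orP => [->|/eqP->] //; by case: ifP.
- move=> g h x; case/orP => [H|/eqP->].
    by rewrite !actE !inJmI_smul H /= !inJmI_smul H smul_mul.
  by rewrite !act0.
- move=> g x; case/orP => [H|/eqP->]; last by rewrite eqxx.
  move=> Hne; rewrite actE inJmI_smul H => E.
  have [ij Hij] : exists ij, x ij != None.
    apply/existsP; apply: contraR Hne => /existsPn Hn.
    by apply/eqP/ffunP => ij; rewrite ffunE; move: (Hn ij); case: (x ij).
  move/ffunP/(_ ij): E; rewrite ffunE; case: (x ij) Hij => // a _ [].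
  by move/(canRL (mulgK a)); rewrite mulgV.
Qed.

Lemma mor_gen e (act : gT -> mat -> mat) (T f : mat -> mat) :
  (forall g x, act g x = if inJmI e (smul g x) then smul g x else zero) ->
  (forall x, f x = if inJmI e (T x) then T x else zero) ->
  (forall g x, T (smul g x) = smul g (T x)) -> T zero = zero ->
  (forall x1 x2, inJmI e x1 -> inJmI e x2 -> inJmI e (T x1) -> T x1 = T x2 -> x1 = x2) ->
  vect_mor (inP e) act zero f.
Proof.
move=> actE fE Tsmul T0 Tinj.
have [_ act0 act1 _ _] := obj_gen actE.
have f0 : f zero = zero by rewrite fE T0; case: ifP.
split.
- move=> x _; rewrite fE; case: ifP => H; first by rewrite /inP H.
  by rewrite /inP eqxx orbT.
- exact: f0.
- move=> g x; case/orP => [H|/eqP->]; last by rewrite act0 f0 act0.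
  rewrite (actE g x) inJmI_smul H fE Tsmul inJmI_smul fE.
  case: ifP => H2; first by rewrite actE inJmI_smul H2.
  by rewrite act0.
- move=> x1 x2 P1 P2; rewrite !fE.
  case: ifP => H1; last by move=> _; rewrite eqxx.
  case: ifP => H2; last by move=> E; rewrite E eqxx.
  move=> E Hne; exists 1%g; rewrite act1; last exact: P2.
  have Q1 : inJmI e x1.
    case/orP: P1 => [Q|/eqP E1]; first exact: Q.
    by move/eqP: Hne => Hne; exfalso; apply: Hne; rewrite E1; exact: T0.
  have Q2 : inJmI e x2.
    case/orP: P2 => [Q|/eqP E2]; first exact: Q.
    by move/eqP: Hne => Hne; exfalso; apply: Hne; rewrite E E2; exact: T0.
  exact: (Tinj x1 x2 Q1 Q2 H1 E).
Qed.

Lemma left_inj e m x1 x2 : isI m -> inJmI e x1 -> inJmI e x2 -> inJmI e (mmul m x1) ->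
  mmul m x1 = mmul m x2 -> x1 = x2.
Proof.
move=> Im H1 H2 H3 E; apply: (F2 Im).
- exact: (rank_JmI_eq H1 H3).
- rewrite -E; exact: (rank_JmI_eq H2 H3).
- exact: E.
Qed.

Lemma right_inj e m x1 x2 : isI m -> inJmI e x1 -> inJmI e x2 -> inJmI e (mmul x1 m) ->
  mmul x1 m = mmul x2 m -> x1 = x2.
Proof.
move=> Im H1 H2 H3 E; apply: (F2r Im).
- exact: (rank_JmI_eq H1 H3).
- rewrite -E; exact: (rank_JmI_eq H2 H3).
- exact: E.
Qed.

Lemma mmul_scall g x : mmul (scal n g) x = smul g x.
Proof.
apply/ffunP => -[i k]; rewrite !ffunE /=.
case: pickP => [j|H]; rewrite ?ffunE /=.
  case: (i =P j) => [<-|_]; last by case/andP.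
  by case: (x (i,k)).
move: (H i); rewrite ffunE eqxx /=; case: (x (i,k)) => [a|] //.
Qed.

Lemma mmul_scalr g x : mmul x (scal n g) = smul g x.
Proof.
apply/ffunP => -[i k]; rewrite !ffunE /=.
case: pickP => [j|H]; rewrite ?ffunE /=.
  case E: (x (i,j)) => [a|]; last by case/andP.
  case: (j =P k) => [Ejk|_]; last by case/andP.
  by subst; rewrite E /= Hab.
move: (H k); rewrite ffunE eqxx /= andbT; case: (x (i,k)) => [a|] //.
Qed.

End Aux.

Theorem mainTheorem10 (gT : finGroupType) (n : nat) :
  abelian [set: gT] -> 0 < n ->
  left_inductive gT n /\ right_inductive gT n.
Proof.
move=> /centsP Hab0 _.
have Hab : forall a b : gT, (a * b = b * a)%g.
  by move=> a b; apply: (Hab0 a); rewrite inE.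
split => e _; split.
- by apply: (obj_gen Hab) => g x; rewrite /lact /= mmul_scall.
- move=> m Im; apply: (@mor_gen _ _ Hab e _ (mmul m)).
  + by move=> g x; rewrite /lact /= mmul_scall.
  + by [].
  + by move=> g x; rewrite mmul_smulr.
  + exact: mmulr0.
  + by move=> x1 x2; apply: left_inj.
- by apply: (obj_gen Hab) => g x; rewrite /Defs.ract /= (mmul_scalr Hab).
- move=> m Im; apply: (@mor_gen _ _ Hab e _ (fun x => mmul x m)).
  + by move=> g x; rewrite /Defs.ract /= (mmul_scalr Hab).
  + by [].
  + by move=> g x; rewrite mmul_smull.
  + exact: mmul0r.
  + by move=> x1 x2; apply: right_inj.
Qed.
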